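(* Let $M\ge 2$. (i) For every prime $p$ and every $k\ge1$, $\Gamma_1(p^k)$ is a normal subgroup of $\Gamma_1(p)$. (ii) If $m$ and $n$ are positive integers with $m\mid_s n$, then $\Gamma_1(n)$ is a normal subgroup of $\Gamma_1(m)$.
   Context: For a prime power $p^k$ ($k>0$), $\Gamma_1(p^k)=\{g=(g_{ij})\in SL_M(\mathbb{Z}): p^{k-1}\mid g_{ij}\text{ for }i<j,\ p^k\mid (g_{ij}-\delta_{ij})\text{ for } i\ge j\}$. For $n=p_1^{e_1}\cdots p_s^{e_s}$, $\Gamma_1(n)=\bigcap_i\Gamma_1(p_i^{e_i})$. We write $m\mid_s n$ (''$n$ is a strong multiple of $m$'') if $m\mid n$ and every prime dividing $n$ also divides $m$. *)

(* Defs.v *)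
From HB Require Import structures.
From mathcomp Require Import all_boot all_order all_algebra.
Set Implicit Arguments. Unset Strict Implicit. Unset Printing Implicit Defensive.
Import Order.TTheory GRing.Theory Num.Theory.
Local Open Scope ring_scope.

Definition inSL (M : nat) (g : 'M[int]_M) : Prop := \det g = 1.

Definition Gamma1pp (M p k : nat) (g : 'M[int]_M) : Prop :=
  inSL g /\
  forall i j : 'I_M,
    ((i < j)%N -> ((p ^ k.-1)%N%:Z %| g i j)%Z) /\
    ((j <= i)%N -> ((p ^ k)%N%:Z %| g i j - (i == j)%:R)%Z).

(* Gamma_1(n) = intersection over the prime powers p^e exactly dividing n
   (for n = 1 this is SL_M(Z)). *)
Definition Gamma1 (M n : nat) (g : 'M[int]_M) : Prop :=
  inSL g /\ forall p : nat, prime p -> (p %| n)%N -> Gamma1pp p (logn p n) g.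

Definition strong_dvd (m n : nat) : Prop :=
  (m %| n)%N /\ forall p : nat, prime p -> (p %| n)%N -> (p %| m)%N.

Definition normal_subgroup (M : nat) (H G : 'M[int]_M -> Prop) : Prop :=
  (forall g, H g -> G g) /\
  H 1%:M /\
  (forall a b, H a -> H b -> H (a *m b)) /\
  (forall a, H a -> H (invmx a)) /\
  (forall g h, G g -> H h -> H (g *m h *m invmx g)).

(* Main.v *)
Require Import Defs.
From HB Require Import structures.
From mathcomp Require Import all_boot all_order all_algebra zify.
Import GRing.Theory Num.Theory.
Local Open Scope ring_scope.

Definition inL (p c n : nat) (X : 'M[int]_n) :=
  forall i j : 'I_n, ((p ^ (c + (j <= i)))%N%:Z %| X i j)%Z.

Section L.
Variable p n : nat.

Lemma inL_add c X Y : inL p c n X -> inL p c n Y -> inL p c n (X + Y).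
Proof. by move=> hX hY i j; rewrite mxE rpredD. Qed.
Lemma inL_opp c X : inL p c n X -> inL p c n (- X).
Proof. by move=> hX i j; rewrite mxE rpredN. Qed.
Lemma inL_sub c X Y : inL p c n X -> inL p c n Y -> inL p c n (X - Y).
Proof. by move=> hX hY; apply: inL_add => //; apply: inL_opp. Qed.
Lemma inL0 c : inL p c n 0.
Proof. by move=> i j; rewrite mxE dvdz0. Qed.
Lemma inL_scale c a X : inL p c n X -> inL p c n (a *: X).
Proof. by move=> hX i j; rewrite mxE dvdz_mull. Qed.
Lemma inL_mono c c' X : (c <= c')%N -> inL p c' n X -> inL p c n X.
Proof.
move=> le hX i j; apply: dvdz_trans (hX i j).
by apply: dvdn_exp2l; rewrite leq_add2r.
Qed.
Lemma inL_scalar c a : ((p ^ c.+1)%N%:Z %| a)%Z -> inL p c n a%:M.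
Proof.
move=> ha i j; rewrite mxE; case: eqP => [->|_]; last by rewrite mulr0n dvdz0.
rewrite leqnn mulr1n; move: ha; congr (_ %| _)%Z; congr (Posz (expn _ _)); lia.
Qed.
Lemma inL_mul a b X Y : inL p a n X -> inL p b n Y -> inL p (a + b) n (X *m Y).
Proof.
move=> hX hY i j; rewrite mxE.
apply: (big_ind (fun x => ((p ^ (a + b + (j <= i)))%N%:Z %| x)%Z)).
- exact: dvdz0.
- by move=> x y; apply: rpredD.
move=> l _; apply: dvdz_trans (dvdz_mul (hX i l) (hY l j)).
rewrite -PoszM -expnD.
apply: dvdn_exp2l.
case: (leqP j i) => ji; case: (leqP l i) => li; case: (leqP j l) => jl /=; lia.
Qed.
End L.
Arguments inL_add {p n c X Y}.
Arguments inL_opp {p n c X}.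
Arguments inL_sub {p n c X Y}.
Arguments inL_scale {p n c} a {X}.
Arguments inL_mono {p n c c' X}.
Arguments inL_scalar {p n c a}.
Arguments inL_mul {p n a b X Y}.

Definition Gp (p c n : nat) (g : 'M[int]_n) := \det g = 1 /\ inL p c n (g - 1%:M).

Section G.
Variable p n : nat.

Lemma Gp_mono c c' g : (c <= c')%N -> Gp p c' n g -> Gp p c n g.
Proof. by move=> le [d hg]; split=> //; apply: inL_mono hg. Qed.

Lemma Gp1 c : Gp p c n 1%:M.
Proof. by split; [rewrite det1 | rewrite subrr; apply: inL0]. Qed.

Lemma Gp_mul c g h : Gp p c n g -> Gp p c n h -> Gp p c n (g *m h).
Proof.
move=> [dg hg] [dh hh]; split; first by rewrite det_mulmx dg dh mulr1.
have -> : g *m h - 1%:M = (g - 1%:M) *m h + (h - 1%:M).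
  by rewrite mulmxBl mul1mx addrA subrK.
apply: inL_add => //.
rewrite -[h in _ *m h](subrK 1%:M) mulmxDr mulmx1.
apply: inL_add => //.
apply: (inL_mono (leq_addr c c)).
exact: inL_mul.
Qed.

Lemma inL_lmul c g X : Gp p 0 n g -> inL p c n X -> inL p c n (g *m X).
Proof.
move=> [_ hg] hX; rewrite -[g](subrK 1%:M) mulmxDl mul1mx.
apply: inL_add => //; have := inL_mul hg hX; by rewrite add0n.
Qed.

Lemma inL_rmul c g X : Gp p 0 n g -> inL p c n X -> inL p c n (X *m g).
Proof.
move=> [_ hg] hX; rewrite -[g](subrK 1%:M) mulmxDr mulmx1.
apply: inL_add => //; have := inL_mul hX hg; by rewrite addn0.
Qed.

Definition Rc c (Y : 'M[int]_n) := exists a : int, inL p c n (Y - a%:M).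

Lemma Rc_add c Y Z : Rc c Y -> Rc c Z -> Rc c (Y + Z).
Proof.
move=> [a hY] [b hZ]; exists (a + b).
have -> : Y + Z - (a + b)%:M = (Y - a%:M) + (Z - b%:M).
  rewrite (raddfD (@scalar_mx int n)) opprD !addrA; congr (_ + _).
  by rewrite addrAC.
exact: inL_add.
Qed.

Lemma Rc_mul c Y Z : Rc c Y -> Rc c Z -> Rc c (Y *m Z).
Proof.
move=> [a hY] [b hZ]; exists (a * b).
have [X -> hX] : exists2 X, Y = X + a%:M & inL p c n X.
  by exists (Y - a%:M); rewrite ?subrK.
have [W -> hW] : exists2 W, Z = W + b%:M & inL p c n W.
  by exists (Z - b%:M); rewrite ?subrK.
rewrite mulmxDl !mulmxDr scalar_mxM !addrA addrK.
rewrite mul_scalar_mx mul_mx_scalar.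
apply: inL_add; last exact: (inL_scale _ hW).
apply: inL_add; last exact: (inL_scale _ hX).
apply: (inL_mono (leq_addr c c)).
exact: inL_mul.
Qed.

Lemma Rc_scalar c a : Rc c a%:M.
Proof. by exists a; rewrite subrr; apply: inL0. Qed.
End G.
Arguments Gp_mono {p n c c' g}.
Arguments Gp_mul {p n c g h}.
Arguments inL_lmul {p n c g X}.
Arguments inL_rmul {p n c g X}.
Arguments Rc_add {p n c Y Z}.
Arguments Rc_mul {p n c Y Z}.
Arguments Rc_scalar {p n c} a.

Section Inv.
Variables p n : nat.
Local Notation N := n.+1.

Lemma Rc_horner c h (q : {poly int}) : Gp p c N h -> Rc p N c (horner_mx h q).
Proof.
move=> [_ hh]; elim/poly_ind: q => [|q a IH].
  by rewrite rmorph0; exists 0; rewrite (raddf0 (@scalar_mx int N)) subr0; apply: inL0.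
rewrite rmorphD rmorphM /= horner_mx_X horner_mx_C -mulmxE.
apply: Rc_add; last exact: Rc_scalar.
apply: Rc_mul => //; by exists 1.
Qed.

Lemma Gp_inv c h : Gp p c N h -> Gp p c N (invmx h).
Proof.
move=> Gh; have [dh hh] := Gh.
have hu : h \in unitmx by rewrite unitmxE dh unitr1.
split; first by rewrite det_inv dh invr1.
have key : forall q : {poly int}, exists2 Q, Rc p N c Q & horner_mx h q = (q`_0)%:M + Q *m h.
  elim/poly_ind => [|q a IH].
    exists 0; last by rewrite rmorph0 coef0 mul0mx addr0 (raddf0 (@scalar_mx int N)).
    by exists 0; rewrite (raddf0 (@scalar_mx int N)) subr0; apply: inL0.
  exists (horner_mx h q); first exact: Rc_horner.
  rewrite rmorphD rmorphM /= horner_mx_X horner_mx_C -mulmxE coefD coefMX coefC /=.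
  by rewrite add0r addrC.
have [Q RQ EQ] := key (char_poly h).
rewrite Cayley_Hamilton char_poly_det dh mulr1 in EQ.
set s : int := (-1) ^+ N in EQ.
have ss : s * s = 1 by rewrite /s -expr2 -exprM mulnC exprM sqrrN expr1n.
have EQ' : invmx h = - s *: Q.
  have := congr1 (mulmx^~ (invmx h)) EQ.
  rewrite mul0mx mulmxDl -mulmxA mulmxV // mulmx1 mul_scalar_mx => /eqP.
  rewrite eq_sym addr_eq0 => /eqP E.
  by rewrite -[invmx h]scale1r -ss -scalerA E scalerN scaleNr.
have [b hb] : Rc p N c (invmx h).
  have [a ha] := RQ; exists (- s * a).
  by rewrite EQ' -scale_scalar_mx -scalerBr; apply: inL_scale.
have [X EX hX] : exists2 X, invmx h = X + b%:M & inL p c N X.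
  by exists (invmx h - b%:M); rewrite ?subrK.
have [A EA hA] : exists2 A, h = A + 1%:M & inL p c N A.
  by exists (h - 1%:M); rewrite ?subrK.
have E1 := mulVmx hu.
rewrite EX EA mulmxDl !mulmxDr mulmx1 mul_scalar_mx mulmx1 !addrA in E1.
have hd : inL p c N (b%:M - 1%:M).
  have -> : b%:M - 1%:M = - (X *m A + X + b *: A).
    by rewrite -E1 opprD addrCA subrr addr0.
  apply: inL_opp; apply: inL_add; last exact: inL_scale.
  apply: inL_add => //; apply: (inL_mono (leq_addr c c)); exact: inL_mul.
by rewrite EX -addrA; apply: inL_add.
Qed.
End Inv.

Lemma Gp_conj p n c g h : Gp p 0 n.+1 g -> Gp p c n.+1 h ->
  Gp p c n.+1 (g *m h *m invmx g).
Proof.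
move=> Gg Gh; have [dg _] := Gg; have [dh hh] := Gh.
have hu : g \in unitmx by rewrite unitmxE dg unitr1.
split; first by rewrite !det_mulmx det_inv dg dh invr1 !mulr1.
have -> : g *m h *m invmx g - 1%:M = g *m (h - 1%:M) *m invmx g.
  by rewrite mulmxBr mulmx1 mulmxBl mulmxV.
apply: inL_rmul; first exact: Gp_inv.
exact: inL_lmul.
Qed.

Lemma G1pp_Gp p k M g : (0 < k)%N -> Gamma1pp p k g <-> Gp p k.-1 M g.
Proof.
move=> k0; split.
  move=> [dg hg]; split=> // i j; rewrite !mxE.
  have [h1 h2] := hg i j.
  case: (leqP j i) => ji.
    by move: (h2 ji); rewrite addn1 prednK.
  rewrite addn0; have -> : (i == j) = false.
    by apply/eqP => e; move: ji; rewrite e ltnn.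
  by rewrite subr0; apply: h1.
move=> [dg hg]; split=> // i j; split => ij; have := hg i j; rewrite !mxE.
  have -> : (i == j) = false.
    by apply/eqP => e; move: ij; rewrite e ltnn.
  by rewrite leqNgt ij addn0 subr0.
by rewrite ij addn1 prednK.
Qed.
Arguments G1pp_Gp {p k M g}.
Arguments Gp_inv {p n c h}.
Arguments Gp_conj {p n c g h}.

Theorem mainTheorem4 (M : nat) (hM : (2 <= M)%N) :
  (forall p k : nat, prime p -> (0 < k)%N ->
     normal_subgroup (@Gamma1pp M p k) (@Gamma1pp M p 1)) /\
  (forall m n : nat, (0 < m)%N -> (0 < n)%N -> strong_dvd m n ->
     normal_subgroup (@Gamma1 M n) (@Gamma1 M m)).
Proof.
case: M hM => [//|N] _.
have k1 : (0 < 1)%N by [].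
split.
  move=> p k pp k0; split; [|split; [|split; [|split]]].
  - move=> g /(G1pp_Gp k0) Gg; apply/(G1pp_Gp k1); exact: Gp_mono (leq0n _) Gg.
  - apply/(G1pp_Gp k0); exact: Gp1.
  - move=> a b /(G1pp_Gp k0) Ga /(G1pp_Gp k0) Gb; apply/(G1pp_Gp k0); exact: Gp_mul.
  - move=> a /(G1pp_Gp k0) Ga; apply/(G1pp_Gp k0); exact: Gp_inv.
  - move=> g h /(G1pp_Gp k1) Gg /(G1pp_Gp k0) Gh; apply/(G1pp_Gp k0); exact: Gp_conj.
move=> m n m0 n0 [mn sdiv].
have lg : forall p d, (0 < d)%N -> prime p -> (p %| d)%N -> (0 < logn p d)%N.
  by move=> p d d0 pp pd; rewrite logn_gt0 mem_primes pp d0 pd.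
split; [|split; [|split; [|split]]].
- move=> g [dg hg]; split=> // p pp pm.
  have pn : (p %| n)%N := dvdn_trans pm mn.
  apply/(G1pp_Gp (lg _ _ m0 pp pm)).
  apply: (Gp_mono _ ((G1pp_Gp (lg _ _ n0 pp pn)).1 (hg p pp pn))).
  by rewrite -!subn1 leq_sub2r // dvdn_leq_log.
- split; first by rewrite /inSL det1.
  move=> p pp pn; apply/(G1pp_Gp (lg _ _ n0 pp pn)); exact: Gp1.
- move=> a b [da ha] [db hb]; split; first by rewrite /inSL det_mulmx da db mulr1.
  move=> p pp pn; apply/(G1pp_Gp (lg _ _ n0 pp pn)).
  apply: Gp_mul; apply/(G1pp_Gp (lg _ _ n0 pp pn)); [exact: ha | exact: hb].
- move=> a [da ha]; split; first by rewrite /inSL det_inv da invr1.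
  move=> p pp pn; apply/(G1pp_Gp (lg _ _ n0 pp pn)).
  apply: Gp_inv; apply/(G1pp_Gp (lg _ _ n0 pp pn)); exact: ha.
- move=> g h [dg hg] [dh hh].
  split; first by rewrite /inSL !det_mulmx det_inv dg dh invr1 !mulr1.
  move=> p pp pn; have pm : (p %| m)%N := sdiv p pp pn.
  apply/(G1pp_Gp (lg _ _ n0 pp pn)); apply: Gp_conj.
    apply: (Gp_mono (leq0n _)).
    apply/(G1pp_Gp (lg _ _ m0 pp pm)); exact: hg.
  apply/(G1pp_Gp (lg _ _ n0 pp pn)); exact: hh.
Qed.
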